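(* Under the setting of the context, let $\kappa\in\mathbb{N}^d$ and assume $f$ is uniformly Lipschitz of order $\|\kappa\|_\infty$. (a) (Invariance) Suppose a sequence $(G_n)\subset\mathcal G$ with $\widetilde W_\kappa(G_n,G_0)\to0$ admits some $\kappa$-minimal form all of whose ratios $\xi_l(G_n)/\widetilde W_\kappa^{\|\kappa\|_\infty}(G_n,G_0)$ tend to $0$. Then for every $\kappa$-minimal form $\sum_{l=1}^{T'}(\xi'_l(G_n)/\widetilde W_\kappa^{\|\kappa\|_\infty}(G_n,G_0))H'_l(x)$ along the same sequence, there is a subsequence along which $\xi'_l(G_n)/\widetilde W_\kappa^{\|\kappa\|_\infty}(G_n,G_0)\to0$ for all $l$. (b) (Monotonicity) If $G_0$ is $\kappa$-singular relative to $\mathcal G$, then $G_0$ is $\kappa'$-singular relative to $\mathcal G$ for every $\kappa'\in\mathbb{N}^d$ with $\kappa'\preceq\kappa$. In particular, if $G_0$ is $r$-singular for some integer $r>1$, it is $(r-1)$-singular.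
   Context: Setting: $\Theta\subset\mathbb{R}^d$ compact; $\{f(\cdot|\eta):\eta\in\Theta\}$ a family of probability densities on a Euclidean space such that $f(\cdot|\eta)$ for distinct $\eta$ are linearly independent functions. For $G=\sum_ip_i\delta_{\eta_i}$, $p_G(x)=\sum_ip_if(x|\eta_i)$. $f$ is uniformly Lipschitz of order $r$ if it is $r$ times differentiable in $\eta$ and there are $C,\delta>0$ with $\sum_{|\alpha|=r}|\partial^\alpha_\eta f(x|\eta_1)-\partial^\alpha_\eta f(x|\eta_2)|\,|\gamma^\alpha|\le C\|\eta_1-\eta_2\|_r^\delta\|\gamma\|_r^r$ for all $x$, $\eta_1,\eta_2\in\Theta$, $\gamma\in\mathbb{R}^d$. Distances: $W_r$ is the order-$r$ Wasserstein distance with $\ell_r$ ground norm; $d_\kappa(\theta_1,\theta_2)=(\sum_i|\theta_1^{(i)}-\theta_2^{(i)}|^{\kappa_i})^{1/\|\kappa\|_\infty}$ and $\widetilde W_\kappa(G,G')=(\inf_q\sum q_{ij}d_\kappa^{\|\kappa\|_\infty}(\eta_i,\eta'_j))^{1/\|\kappa\|_\infty}$ (inf over couplings); $\widetilde W_{(r,\dots,r)}=W_r$. Fix $G_0=\sum_{i=1}^{k_0}p^0_i\delta_{\eta^0_i}$ with distinct atoms; sequences $G_n\to G_0$ are written (after subsequence/relabelling) as $\sum_{i=1}^{k_0+\bar l}\sum_{j=1}^{s_i}p^n_{ij}\delta_{\eta^n_{ij}}$ with $\eta^n_{ij}\to\eta^0_i$, extra distinct limit points $\eta^0_i$ ($i>k_0$)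 with $p^0_i=0$, $\Delta\eta_{ij}=\eta_{ij}-\eta_i^0$, $\Delta p_{i\cdot}=\sum_jp_{ij}-p_i^0$. Let $\mathcal G\ni G_0$ be a class of discrete probability measures on $\Theta$ with uniformly bounded number of atoms. A $\kappa$-minimal form along a sequence $G_n\in\mathcal G$, $\widetilde W_\kappa(G_n,G_0)\to0$, is an identity $\frac{p_{G_n}(x)-p_{G_0}(x)}{\widetilde W_\kappa^{\|\kappa\|_\infty}(G_n,G_0)}=\sum_{l=1}^{T}\frac{\xi_l(G_n)}{\widetilde W_\kappa^{\|\kappa\|_\infty}(G_n,G_0)}H_l(x)+o(1)$ for a.e. $x$ as $n\to\infty$, where $H_1,\dots,H_T$ are linearly independent functions not depending on $n$, and each $\xi_l(G)$ is a polynomial (coefficients depending only on $G_0$) in the components of $\Delta\eta_{ij},\Delta p_{i\cdot},p_{ij}$. $G_0$ is $\kappa$-singular relative to $\mathcal G$ if some sequence in $\mathcal G$ tending to $G_0$ in $\widetilde W_\kappa$ admits a $\kappa$-minimal form with $\xi_l(G_n)/\widetilde W_\kappa^{\|\kappa\|_\infty}(G_n,G_0)\to0$ for all $l$. For integer $r\ge1$, $r$-singular means $(r,\dots,r)$-singular. $\kappa'\preceq\kappa$ means componentwise $\le$. *)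

(* Defs.v *)
From mathcomp Require Import all_boot all_order all_algebra.
From mathcomp Require Import all_classical all_reals all_analysis.
Export Order.TTheory GRing.Theory Num.Theory numFieldNormedType.Exports.

Unset Implicit Arguments.
Unset Strict Implicit.
Unset Printing Implicit Defensive.

Local Open Scope ring_scope.
Local Open Scope classical_set_scope.

Section MixtureDefs.
Context {R : realType}.
Local Notation vec n := 'rV[R]_n.

(* ---------- discrete measures on R^d, represented by their weight function
   G : R^d -> R  (G t = mass of the atom t, 0 off the support) ---------- *)
Definition supp {d} (G : vec d -> R) : set (vec d) := [set t | G t != 0].

Definition discrete_prob {d} (Theta : set (vec d)) (G : vec d -> R) : Prop :=
  (forall t, 0 <= G t) /\ finite_set (supp G) /\ supp G `<=` Theta /\
  \sum_(t \in supp G) G t = 1.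

Definition atoms_le {d} (K : nat) (G : vec d -> R) : Prop :=
  exists s : seq (vec d), (size s <= K)%N /\ supp G `<=` [set t | t \in s].

Definition atoms_measure {d k} (p : 'I_k -> R) (e : 'I_k -> vec d) : vec d -> R :=
  fun t => \sum_(i < k | e i == t) p i.

(* mixture density p_G(x) = sum_{atoms t} G{t} f(x|t) ;  f x t = f(x|t) *)
Definition mixture {d m} (f : vec m -> vec d -> R) (G : vec d -> R) (x : vec m) : R :=
  \sum_(t \in supp G) G t * f x t.

Definition kinf {d} (kappa : 'I_d -> nat) : nat := \max_(i < d) kappa i.

Definition d_kappa {d} (kappa : 'I_d -> nat) (t1 t2 : vec d) : R :=
  powR (\sum_(i < d) `|t1 ord0 i - t2 ord0 i| ^+ kappa i) (kinf kappa)%:R^-1.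

Definition coupling {d} (G G' : vec d -> R) (q : vec d -> vec d -> R) : Prop :=
  (forall t t', 0 <= q t t') /\
  (forall t t', q t t' != 0 -> G t != 0 /\ G' t' != 0) /\
  (forall t, \sum_(t' \in supp G') q t t' = G t) /\
  (forall t', \sum_(t \in supp G) q t t' = G' t').

Definition Wtilde {d} (kappa : 'I_d -> nat) (G G' : vec d -> R) : R :=
  powR (inf [set c | exists q, coupling G G' q /\
           c = \sum_(t \in supp G) \sum_(t' \in supp G')
                  q t t' * d_kappa kappa t t' ^+ kinf kappa])
       (kinf kappa)%:R^-1.

Definition box_vol {m} (a b : vec m) : R := \prod_(i < m) (b ord0 i - a ord0 i).
Definition in_box {m} (a b x : vec m) : Prop :=
  forall i, a ord0 i <= x ord0 i <= b ord0 i.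
Definition lebesgue_null {m} (N : set (vec m)) : Prop :=
  forall eps : R, 0 < eps -> exists a b : nat -> vec m,
    (forall k i, a k ord0 i <= b k ord0 i) /\
    (forall x, N x -> exists k, in_box (a k) (b k) x) /\
    (forall n, \sum_(k < n) box_vol (a k) (b k) <= eps).
Definition ae {m} (P : vec m -> Prop) : Prop :=
  exists N, lebesgue_null N /\ forall x, ~ N x -> P x.

Definition ae_lin_indep {m T} (H : 'I_T -> vec m -> R) : Prop :=
  forall c : 'I_T -> R, ae (fun x => \sum_(l < T) c l * H l x = 0) ->
  forall l, c l = 0.

Definition pdiff {d} (i : 'I_d) (g : vec d -> R) : vec d -> R :=
  fun t => 'D_(delta_mx 0 i) g t.
Definition pdl {d} (l : seq 'I_d) (g : vec d -> R) : vec d -> R := foldr pdiff g l.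
Definition mindex_list {d} (alpha : 'I_d -> nat) : seq 'I_d :=
  flatten [seq nseq (alpha i) i | i <- enum 'I_d].
Definition pderiv {d} (alpha : 'I_d -> nat) (g : vec d -> R) : vec d -> R :=
  pdl (mindex_list alpha) g.
Definition lr_norm {d} (r : nat) (v : vec d) : R :=
  powR (\sum_(i < d) `|v ord0 i| ^+ r) r%:R^-1.

Definition r_times_diff_on {d} (r : nat) (U : set (vec d)) (g : vec d -> R) : Prop :=
  forall l : seq 'I_d, (size l < r)%N -> forall t, U t -> differentiable (pdl l g) t.

Definition unif_lipschitz {d m} (Theta : set (vec d)) (f : vec m -> vec d -> R)
    (r : nat) : Prop :=
  (exists U : set (vec d), open U /\ Theta `<=` U /\
     forall x, r_times_diff_on r U (f x)) /\
  exists C delta : R, 0 < C /\ 0 < delta /\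
    forall x (t1 t2 gam : vec d), Theta t1 -> Theta t2 ->
      \sum_(a : {ffun 'I_d -> 'I_r.+1} | (\sum_(i < d) (a i : nat) == r)%N)
         `|pderiv (fun i => (a i : nat)) (f x) t1
           - pderiv (fun i => (a i : nat)) (f x) t2|
         * `|\prod_(i < d) gam ord0 i ^+ a i|
      <= C * powR (lr_norm r (t1 - t2)) delta * lr_norm r gam ^+ r.

(* ---------- relabelled representation of a sequence G_n -> G_0 ----------
   G_0 = sum_{i<k0} p0_i delta_{e0_i}.  The atoms of G_n are indexed by
   j : 'I_N; atom j belongs to group grp j : 'I_(k0+lbar), has weight w n j
   and location at n j, and at n j -> lim (grp j).  The limit points
   lim i (i < k0) are the atoms of G_0, the others are the extra limit
   points (with p0_i = 0). *)
Record relabel (d k0 : nat) := Relabel {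
  rl_N : nat;
  rl_lbar : nat;
  rl_grp : 'I_rl_N -> 'I_(k0 + rl_lbar);
  rl_lim : 'I_(k0 + rl_lbar) -> vec d;
  rl_w : nat -> 'I_rl_N -> R;
  rl_at : nat -> 'I_rl_N -> vec d }.
Arguments rl_N {d k0} r.
Arguments rl_lbar {d k0} r.
Arguments rl_grp {d k0} r _.
Arguments rl_lim {d k0} r _.
Arguments rl_w {d k0} r _ _.
Arguments rl_at {d k0} r _ _.

Definition relabel_of {d k0} (e0 : 'I_k0 -> vec d) (Gs : nat -> vec d -> R)
    (rp : relabel d k0) : Prop :=
  injective (rl_lim rp) /\
  (forall i : 'I_k0, rl_lim rp (lshift (rl_lbar rp) i) = e0 i) /\
  (forall n j, 0 < rl_w rp n j) /\
  (forall n, injective (rl_at rp n)) /\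
  (forall n, Gs n = atoms_measure (rl_w rp n) (rl_at rp n)) /\
  (forall j, (fun n => rl_at rp n j) @ \oo --> rl_lim rp (rl_grp rp j)).

(* variables of the polynomials xi_l:
   components of Delta eta_j (j, c), Delta p_{i.} (i), and p_j (j) *)
Definition rl_var {d k0} (rp : relabel d k0) : finType :=
  (('I_(rl_N rp) * 'I_d) + 'I_(k0 + rl_lbar rp) + 'I_(rl_N rp))%type.

Definition p0ext {k0 lbar} (p0 : 'I_k0 -> R) (i : 'I_(k0 + lbar)) : R :=
  match fintype.split i with inl i0 => p0 i0 | inr _ => 0 end.

Definition rl_val {d k0} (p0 : 'I_k0 -> R) (rp : relabel d k0) (n : nat)
    (v : rl_var rp) : R :=
  match v with
  | inl (inl (j, c)) => rl_at rp n j ord0 c - rl_lim rp (rl_grp rp j) ord0 c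
  | inl (inr i) => \sum_(j < rl_N rp | rl_grp rp j == i) rl_w rp n j - p0ext p0 i
  | inr j => rl_w rp n j
  end.


(* polynomials with real coefficients in the variables V:
   finite lists of monomials (coefficient, exponent vector) *)
Definition mpolyseq (V : finType) := seq (R * {ffun V -> nat}).
Definition peval {V : finType} (P : mpolyseq V) (val : V -> R) : R :=
  \sum_(mo <- P) mo.1 * \prod_(v : V) val v ^+ mo.2 v.

Definition xi_ratio {d k0} (kappa : 'I_d -> nat) (p0 : 'I_k0 -> R)
    (e0 : 'I_k0 -> vec d) (Gs : nat -> vec d -> R) (rp : relabel d k0)
    (P : mpolyseq (rl_var rp)) (n : nat) : R :=
  peval P (rl_val p0 rp n) / Wtilde kappa (Gs n) (atoms_measure p0 e0) ^+ kinf kappa.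


Definition kminimal_form {d m k0} (f : vec m -> vec d -> R) (kappa : 'I_d -> nat)
    (p0 : 'I_k0 -> R) (e0 : 'I_k0 -> vec d) (Gs : nat -> vec d -> R)
    (rp : relabel d k0) (T : nat) (H : 'I_T -> vec m -> R)
    (xi : 'I_T -> mpolyseq (rl_var rp)) : Prop :=
  relabel_of e0 Gs rp /\ ae_lin_indep H /\
  (forall n, 0 < Wtilde kappa (Gs n) (atoms_measure p0 e0)) /\
  ae (fun x =>
    (fun n => (mixture f (Gs n) x - mixture f (atoms_measure p0 e0) x)
                / Wtilde kappa (Gs n) (atoms_measure p0 e0) ^+ kinf kappa
              - \sum_(l < T) xi_ratio kappa p0 e0 Gs rp (xi l) n * H l x)
    @ \oo --> 0).


Definition kseq {d} (Gcal : set (vec d -> R)) (kappa : 'I_d -> nat)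
    (G0 : vec d -> R) (Gs : nat -> vec d -> R) : Prop :=
  (forall n, Gcal (Gs n)) /\ (fun n => Wtilde kappa (Gs n) G0) @ \oo --> 0.

Definition kappa_singular {d m k0} (f : vec m -> vec d -> R)
    (Gcal : set (vec d -> R)) (kappa : 'I_d -> nat)
    (p0 : 'I_k0 -> R) (e0 : 'I_k0 -> vec d) : Prop :=
  exists Gs, kseq Gcal kappa (atoms_measure p0 e0) Gs /\
  exists (rp : relabel d k0) (T : nat) (H : 'I_T -> vec m -> R)
         (xi : 'I_T -> mpolyseq (rl_var rp)),
    kminimal_form f kappa p0 e0 Gs rp T H xi /\
    forall l, xi_ratio kappa p0 e0 Gs rp (xi l) @ \oo --> 0.

End MixtureDefs.

Arguments rl_val {R d k0} p0 rp n v.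
Arguments xi_ratio {R d k0} kappa p0 e0 Gs rp P n.
Arguments kminimal_form {R d m k0} f kappa p0 e0 Gs rp T H xi.

(* Main.v *)
Require Import Defs.
From mathcomp Require Import all_boot all_order all_algebra.
From mathcomp Require Import all_classical all_reals all_analysis.
From mathcomp Require Import ring lra.
Import Order.TTheory GRing.Theory Num.Theory numFieldNormedType.Exports.
Local Open Scope ring_scope.
Local Open Scope classical_set_scope.

Section Helpers.
Context {R : realType}.

Lemma sum_ord_mono (g : nat -> R) (n m : nat) :
  (forall k, 0 <= g k) -> (n <= m)%N -> \sum_(k < n) g k <= \sum_(k < m) g k.
Proof.
move=> g0; elim: m => [|m IH]; first by rewrite leqn0 => /eqP->.
rewrite leq_eqVlt => /orP[/eqP->//|]; rewrite ltnS => /IH h.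
by rewrite big_ord_recr /= (le_trans h) // lerDl.
Qed.

Lemma sum_interleave (g1 g2 : nat -> R) (n : nat) :
  \sum_(k < n.*2) (if odd k then g2 k./2 else g1 k./2) =
  \sum_(k < n) g1 k + \sum_(k < n) g2 k.
Proof.
elim: n => [|n IH]; first by rewrite !big_ord0 addr0.
rewrite doubleS !big_ord_recr /= IH odd_double /= doubleK uphalf_double.
by rewrite addrACA !addrA.
Qed.

Lemma null_union {m} (N1 N2 : set 'rV[R]_m) :
  lebesgue_null N1 -> lebesgue_null N2 -> lebesgue_null (N1 `|` N2).
Proof.
move=> h1 h2 eps eps0.
have e2 : 0 < eps / 2 by rewrite divr_gt0.
have [a1 [b1 [ab1 [c1 s1]]]] := h1 _ e2.
have [a2 [b2 [ab2 [c2 s2]]]] := h2 _ e2.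
exists (fun k => if odd k then a2 k./2 else a1 k./2).
exists (fun k => if odd k then b2 k./2 else b1 k./2).
split; first by move=> k i; case: ifP.
split.
  move=> x [/c1 [k hk]|/c2 [k hk]].
    by exists k.*2; rewrite odd_double doubleK.
  by exists k.*2.+1; rewrite /= odd_double /= uphalf_double.
move=> n.
have vol0 : forall k, 0 <= box_vol (if odd k then a2 k./2 else a1 k./2)
                               (if odd k then b2 k./2 else b1 k./2).
  move=> k; rewrite /box_vol; apply: prodr_ge0 => i _; rewrite subr_ge0.
  by case: ifP.
have hh := sum_ord_mono _ _ _ vol0 (leq_addl n n).
apply: le_trans hh _.
rewrite addnn.
have -> : \sum_(k < n.*2) box_vol (if odd k then a2 k./2 else a1 k./2)
                               (if odd k then b2 k./2 else b1 k./2) =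
  \sum_(k < n.*2) (if odd k then box_vol (a2 k./2) (b2 k./2)
                   else box_vol (a1 k./2) (b1 k./2)).
  by apply: eq_bigr => k _; case: ifP.
rewrite (sum_interleave (fun k => box_vol (a1 k) (b1 k)) (fun k => box_vol (a2 k) (b2 k))).
by rewrite (splitr eps) lerD.
Qed.

Lemma cvg0_eq (u v : nat -> R) : (forall n, u n = v n) ->
  v @ \oo --> 0 -> u @ \oo --> 0.
Proof. by move=> h; have -> : u = v by apply: funext. Qed.

Lemma cvg0_B (u v : nat -> R) : u @ \oo --> 0 -> v @ \oo --> 0 ->
  (fun n => u n - v n) @ \oo --> 0.
Proof. by move=> hu hv; have h := cvgB hu hv; rewrite subr0 in h; exact: h. Qed.

Lemma cvg0_D (u v : nat -> R) : u @ \oo --> 0 -> v @ \oo --> 0 ->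
  (fun n => u n + v n) @ \oo --> 0.
Proof. by move=> hu hv; have h := cvgD hu hv; rewrite addr0 in h; exact: h. Qed.

Lemma cvg0_Ml (c : R) (u : nat -> R) : u @ \oo --> 0 ->
  (fun n => c * u n) @ \oo --> 0.
Proof. by move=> hu; have h := cvgMl_tmp (a := c) hu; rewrite mulr0 in h; exact: h. Qed.

Lemma cvg0_Mr (c : R) (u : nat -> R) : u @ \oo --> 0 ->
  (fun n => u n * c) @ \oo --> 0.
Proof. by move=> hu; have h := cvgMr_tmp (b := c) hu; rewrite mul0r in h; exact: h. Qed.

Definition indep_on {X : Type} {T : nat} (P : X -> Prop) (H : 'I_T -> X -> R) :=
  forall c : 'I_T -> R, (forall x, P x -> \sum_(l < T) c l * H l x = 0) ->
  forall l, c l = 0.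

Lemma cvg_sum0 {T : nat} (u : 'I_T -> nat -> R) :
  (forall l, u l @ \oo --> 0) -> (fun n => \sum_(l < T) u l n) @ \oo --> 0.
Proof.
move=> h.
have := @cvg_big R 'I_T +%R 0 xpredT add_continuous nat \oo (index_enum 'I_T)
   (fun l n => u l n) (fun _ => 0) _ (fun l _ => h l).
by rewrite big1 //; apply.
Qed.

Lemma indep_cvg {X : Type} (P : X -> Prop) (T : nat) :
  forall (H : 'I_T -> X -> R) (rho : 'I_T -> nat -> R), indep_on P H ->
  (forall x, P x -> (fun n => \sum_(l < T) rho l n * H l x) @ \oo --> 0) ->
  forall l, rho l @ \oo --> 0.
Proof.
elim: T => [|T IH] H rho hind hcv; first by case.
have [x0 [Px0 a0]] : exists x0, P x0 /\ H ord0 x0 != 0.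
  apply: contrapT => hn.
  have hc : forall x, P x -> \sum_(l < T.+1) (l == ord0)%:R * H l x = 0.
    move=> x Px.
    rewrite big_ord_recl /= mul1r big1 ?addr0 => [|i _]; last by rewrite mul0r.
    by apply: contrapT => hx; apply: hn; exists x; split => //; apply/eqP.
  have := hind _ hc ord0; rewrite eqxx => /eqP; rewrite oner_eq0 //.
set a := H ord0 x0.
pose G (l : 'I_T) x := H (lift ord0 l) x - H (lift ord0 l) x0 * (H ord0 x / a).
pose rho' (l : 'I_T) := rho (lift ord0 l).
have key : forall x n, \sum_(l < T) rho' l n * G l x =
    \sum_(l < T.+1) rho l n * H l x -
    H ord0 x / a * \sum_(l < T.+1) rho l n * H l x0.
  move=> x n; rewrite !big_ord_recl /= /G /rho'.
  under eq_bigr do rewrite mulrBr.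
  rewrite sumrB mulrDr -/a.
  have -> : \sum_(i < T) rho (lift ord0 i) n * (H (lift ord0 i) x0 * (H ord0 x / a))
     = H ord0 x / a * \sum_(i < T) rho (lift ord0 i) n * H (lift ord0 i) x0.
    by rewrite mulr_sumr; apply: eq_bigr => i _; rewrite mulrA [LHS]mulrC.
  have ha : H ord0 x / a * (rho ord0 n * a) = rho ord0 n * H ord0 x.
    by rewrite mulrCA -mulrA mulVf // mulr1.
  rewrite ha; ring.
have indG : indep_on P G.
  move=> c hc l.
  pose c' (i : 'I_T.+1) := if unlift ord0 i is Some j then c j
    else - (\sum_(j < T) c j * H (lift ord0 j) x0) / a.
  have := hind c' _ (lift ord0 l); rewrite /c' liftK; apply => x Px.
  rewrite big_ord_recl.
  have -> : \sum_(i < T) c' (lift ord0 i) * H (lift ord0 i) x =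
            \sum_(i < T) c i * H (lift ord0 i) x.
    by apply: eq_bigr => i _; rewrite /c' liftK.
  rewrite /c' unlift_none.
  rewrite -[RHS](hc x Px) /G.
  under [in RHS]eq_bigr do rewrite mulrBr.
  rewrite sumrB; apply/eqP; rewrite addrC -subr_eq0; apply/eqP.
  have -> : \sum_(i < T) c i * (H (lift ord0 i) x0 * (H ord0 x / a)) =
      (\sum_(i < T) c i * H (lift ord0 i) x0) * H ord0 x / a.
    rewrite mulr_suml mulr_suml; apply: eq_bigr => i _; rewrite !mulrA.
    by rewrite mulrAC.
  rewrite mulNr; ring.
have cv' : forall l, rho' l @ \oo --> 0.
  apply: (IH G rho' indG) => x Px.
  apply: (cvg0_eq _ _ (key x)).
  exact: (cvg0_B _ _ (hcv x Px) (cvg0_Ml (H ord0 x / a) _ (hcv x0 Px0))).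
have cv0 : rho ord0 @ \oo --> 0.
  have h1 : (fun n => rho ord0 n * a) @ \oo --> 0.
    apply: (cvg0_eq _ (fun n =>
        \sum_(l < T.+1) rho l n * H l x0 - \sum_(l < T) rho' l n * H (lift ord0 l) x0)).
      by move=> n; rewrite big_ord_recl addrK.
    apply: cvg0_B; first exact: hcv.
    apply: (cvg_sum0 (fun l n => rho' l n * H (lift ord0 l) x0)) => l.
    exact: cvg0_Mr.
  apply: (cvg0_eq _ (fun n => rho ord0 n * a * a^-1)); last exact: cvg0_Mr.
  by move=> n; rewrite -mulrA mulfV // mulr1.
move=> l; case: (unliftP ord0 l) => [j ->|->] //.
exact: cv' j.
Qed.

End Helpers.
Section PartA.
Context {R : realType}.

Lemma part_a {d m k0} (f : 'rV[R]_m -> 'rV[R]_d -> R) (kappa : 'I_d -> nat)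
    (p0 : 'I_k0 -> R) (e0 : 'I_k0 -> 'rV[R]_d) (Gs : nat -> 'rV[R]_d -> R)
    (rp : relabel d k0) (T : nat) (H : 'I_T -> 'rV[R]_m -> R)
    (xi : 'I_T -> mpolyseq (rl_var rp))
    (rp' : relabel d k0) (T' : nat) (H' : 'I_T' -> 'rV[R]_m -> R)
    (xi' : 'I_T' -> mpolyseq (rl_var rp')) :
  kminimal_form f kappa p0 e0 Gs rp T H xi ->
  (forall l, xi_ratio kappa p0 e0 Gs rp (xi l) @ \oo --> 0) ->
  kminimal_form f kappa p0 e0 Gs rp' T' H' xi' ->
  forall l, xi_ratio kappa p0 e0 Gs rp' (xi' l) @ \oo --> 0.
Proof.
move=> [_ [_ [_ [N1 [nN1 hN1]]]]] hr [_ [ind2 [_ [N2 [nN2 hN2]]]]].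
have nN := null_union N1 N2 nN1 nN2.
apply: (indep_cvg (fun x => ~ (N1 `|` N2) x) T' H').
  move=> c hc; apply: ind2; exists (N1 `|` N2); split => //.
move=> x hx.
have hx1 : ~ N1 x by move=> h; apply: hx; left.
have hx2 : ~ N2 x by move=> h; apply: hx; right.
have h1 := hN1 x hx1; have h2 := hN2 x hx2.
have h3 := cvg_sum0 (fun l n => xi_ratio kappa p0 e0 Gs rp (xi l) n * H l x)
  (fun l => cvg0_Mr _ _ (hr l)).
have h4 := cvg0_B _ _ (cvg0_D _ _ h1 h3) h2.
apply: (cvg0_eq _ _ _ h4) => n /=.
by rewrite subrK opprB addrC subrK.
Qed.

End PartA.
Section Scalars.
Context {R : realType}.

Lemma sc1 (a B : R) (k' k K : nat) : 0 <= a -> a <= B -> 1 <= B ->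
  (k' <= k)%N -> (k <= K)%N -> a ^+ k <= B ^+ K * a ^+ k'.
Proof.
move=> a0 aB B1 kk kK.
have B0 : 0 <= B by apply: le_trans B1.
rewrite -(subnK kk) exprD ler_wpM2r ?exprn_ge0 //.
apply: (le_trans (lerXn2r _ _ _ aB)); rewrite ?nnegrE //.
have hK : (k - k' <= K)%N by apply: leq_trans (leq_subr _ _) kK.
rewrite -(subnK hK) exprD ler_peMl ?exprn_ge0 ?exprn_ege1 //.
Qed.

Lemma sc2 (a e : R) (k' k K : nat) : 0 <= a -> 0 < e -> e <= 1 ->
  (0 < k')%N -> (k' <= k)%N -> (k <= K)%N -> a ^+ k' <= e ^-1 ^+ K * a ^+ k + e.
Proof.
move=> a0 e0 e1 k0 kk kK.
have eK0 : 0 <= e^-1 ^+ K * a ^+ k by apply: mulr_ge0; apply: exprn_ge0 => //; rewrite invr_ge0 ltW.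
case: (lerP a e) => ae.
  rewrite -[a ^+ k']add0r lerD //.
  apply: (le_trans _ ae); apply: ler_iXnr => //; exact: le_trans ae e1.
rewrite -[a ^+ k']addr0; apply: lerD; last exact: ltW.
have eK : 0 < e ^+ K by rewrite exprn_gt0.
rewrite exprVn -[X in X <= _](mulKf (lt0r_neq0 eK)) ler_wpM2l //; first by rewrite invr_ge0 exprn_ge0 // ltW.
rewrite -(subnK kk) exprD ler_wpM2r ?exprn_ge0 //.
apply: (le_trans (y := e ^+ (k - k'))).
  apply: ler_wiXn2l => //; first exact: ltW.
  by rewrite /=; apply: leq_trans (leq_subr _ _) kK.
by apply: lerXn2r; rewrite ?nnegrE //; apply: ltW.
Qed.

End Scalars.
Section Wlemmas.
Context {R : realType} {d : nat}.
Local Notation vec := 'rV[R]_d.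

Lemma le_fsum {X : choiceType} (P : set X) (f g : X -> R) : finite_set P ->
  (forall x, P x -> f x <= g x) -> \sum_(x \in P) f x <= \sum_(x \in P) g x.
Proof.
move=> fP h; rewrite !fsbig_finite // !big_seq; apply: ler_sum => x.
by rewrite in_fset_set // inE => /h.
Qed.

Definition cost (kap : 'I_d -> nat) (G G' : vec -> R) (q : vec -> vec -> R) :=
  \sum_(t \in supp G) \sum_(t' \in supp G') q t t' * d_kappa kap t t' ^+ kinf kap.
Definition Eset (kap : 'I_d -> nat) (G G' : vec -> R) :=
  [set c | exists q, coupling G G' q /\ c = cost kap G G' q].

Lemma WtildeE (kap : 'I_d -> nat) (G G' : vec -> R) :
  Wtilde kap G G' = powR (inf (Eset kap G G')) (kinf kap)%:R^-1.
Proof. by []. Qed.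

Lemma powK (x : R) (K : nat) : (0 < K)%N -> 0 <= x -> powR x (K%:R^-1) ^+ K = x.
Proof.
move=> K0 x0; rewrite -powR_mulrn ?powR_ge0 // -powRrM mulVf ?powRr1 //.
by rewrite pnatr_eq0 -lt0n.
Qed.

Lemma kinf_ge (kap : 'I_d -> nat) i : (kap i <= kinf kap)%N.
Proof. exact: (leq_bigmax (F := kap) i). Qed.

Lemma kinf_gt0 (kap : 'I_d -> nat) : (0 < d)%N -> (forall i, 0 < kap i)%N ->
  (0 < kinf kap)%N.
Proof. by move=> hd hk; apply: leq_trans (hk (Ordinal hd)) (kinf_ge _ _). Qed.

Lemma dk_pow (kap : 'I_d -> nat) (t t' : vec) : (0 < kinf kap)%N ->
  d_kappa kap t t' ^+ kinf kap = \sum_i `|t ord0 i - t' ord0 i| ^+ kap i.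
Proof. by move=> K0; rewrite /d_kappa powK // sumr_ge0 // => i _; rewrite exprn_ge0. Qed.

Lemma cost_ge0 (kap : 'I_d -> nat) (G G' : vec -> R) q : coupling G G' q -> 0 <= cost kap G G' q.
Proof.
move=> [q0 _]; apply: fsumr_ge0 => t _; apply: fsumr_ge0 => t' _.
by rewrite mulr_ge0 // exprn_ge0 // powR_ge0.
Qed.

Lemma infE_ge0 (kap : 'I_d -> nat) (G G' : vec -> R) : 0 <= inf (Eset kap G G').
Proof.
case: (pselect (Eset kap G G' !=set0)) => [ne|e0].
  by apply: lb_le_inf ne _ => c [q [cq ->]]; exact: cost_ge0.
have -> : Eset kap G G' = set0.
  by apply/seteqP; split => // c hc; apply: e0; exists c.
by rewrite inf0.
Qed.

Lemma Wpow (kap : 'I_d -> nat) (G G' : vec -> R) : (0 < kinf kap)%N ->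
  Wtilde kap G G' ^+ kinf kap = inf (Eset kap G G').
Proof. by move=> K0; rewrite WtildeE powK // infE_ge0. Qed.

Lemma W_ge0 (kap : 'I_d -> nat) (G G' : vec -> R) : 0 <= Wtilde kap G G'.
Proof. exact: powR_ge0. Qed.

Lemma cmp_inf (C : (vec -> vec -> R) -> Prop) (c1 c2 : (vec -> vec -> R) -> R)
    (al be : R) :
  0 < al -> (forall q, C q -> 0 <= c1 q) ->
  (forall q, C q -> c1 q <= al * c2 q + be) -> (exists q, C q) ->
  inf [set c | exists q, C q /\ c = c1 q] <=
  al * inf [set c | exists q, C q /\ c = c2 q] + be.
Proof.
move=> a0 h0 hle [q0 Cq0].
set E1 := [set c | exists q, C q /\ c = c1 q].
set E2 := [set c | exists q, C q /\ c = c2 q].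
have lb1 : has_lbound E1 by exists 0 => c [q [Cq ->]]; exact: h0.
have : (inf E1 - be) / al <= inf E2.
  apply: lb_le_inf; first by exists (c2 q0), q0.
  move=> c [q [Cq ->]]; rewrite ler_pdivrMr // lerBlDr mulrC.
  apply: le_trans (hle q Cq).
  by apply: (ge_inf lb1); exists q.
by rewrite ler_pdivrMr // lerBlDr mulrC.
Qed.

Lemma entry_le (t : vec) i : `|t ord0 i| <= `|t|.
Proof.
have -> : `|t| = mx_norm t by [].
rewrite mx_normrE.
exact: (le_bigmax _ (fun ij : 'I_1 * 'I_d => `|t ij.1 ij.2|) (ord0, i)).
Qed.

End Wlemmas.
Section CostCmp.
Context {R : realType} {d : nat}.
Local Notation vec := 'rV[R]_d.

Lemma fsum_lin {X : choiceType} (P : set X) (f g : X -> R) (a b : R) :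
  finite_set P ->
  \sum_(x \in P) (a * f x + b * g x) = a * \sum_(x \in P) f x + b * \sum_(x \in P) g x.
Proof. by move=> fP; rewrite fsbig_split // !mulr_fsumr. Qed.

Lemma cost_cmp1 (kap kap' : 'I_d -> nat) (G G' : vec -> R) q (B : R) :
  (0 < d)%N -> (forall i, 0 < kap i)%N -> (forall i, 0 < kap' i)%N ->
  (forall i, kap' i <= kap i)%N -> 1 <= B ->
  (forall t t', supp G t -> supp G' t' -> forall i, `|t ord0 i - t' ord0 i| <= B) ->
  finite_set (supp G) -> finite_set (supp G') -> coupling G G' q ->
  cost kap G G' q <= B ^+ kinf kap * cost kap' G G' q.
Proof.
move=> hd hk hk' hkk B1 hB fG fG' [q0 _].
rewrite /cost mulr_fsumr; apply: le_fsum => // t St.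
rewrite mulr_fsumr; apply: le_fsum => // t' St'.
rewrite !dk_pow ?kinf_gt0 // mulrCA; apply: ler_wpM2l; first exact: q0.
rewrite mulr_sumr; apply: ler_sum => i _; apply: sc1 => //.
- exact: hB.
- exact: kinf_ge.
Qed.

Lemma cost_cmp2 (kap kap' : 'I_d -> nat) (G G' : vec -> R) q (e : R) :
  (0 < d)%N -> (forall i, 0 < kap i)%N -> (forall i, 0 < kap' i)%N ->
  (forall i, kap' i <= kap i)%N -> 0 < e -> e <= 1 ->
  finite_set (supp G) -> finite_set (supp G') -> \sum_(t \in supp G) G t = 1 ->
  coupling G G' q ->
  cost kap' G G' q <= e^-1 ^+ kinf kap * cost kap G G' q + d%:R * e.
Proof.
move=> hd hk hk' hkk e0 e1 fG fG' s1 [q0 [_ [marg _]]].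
have mass : \sum_(t \in supp G) \sum_(t' \in supp G') q t t' = 1.
  by rewrite (eq_fsbigr G) // => t _; exact: marg.
set a := e^-1 ^+ kinf kap; set c := d%:R * e.
apply: (le_trans (y := \sum_(t \in supp G) \sum_(t' \in supp G')
   (a * (q t t' * d_kappa kap t t' ^+ kinf kap) + c * q t t'))).
  apply: le_fsum => // t St; apply: le_fsum => // t' St'.
  rewrite !dk_pow ?kinf_gt0 //.
  have hs : \sum_i `|t ord0 i - t' ord0 i| ^+ kap' i <=
            a * \sum_i `|t ord0 i - t' ord0 i| ^+ kap i + c.
    apply: (le_trans (y := \sum_(i < d) (a * `|t ord0 i - t' ord0 i| ^+ kap i + e))).
      apply: ler_sum => i _; apply: sc2 => //; exact: kinf_ge.
    by rewrite big_split /= -mulr_sumr sumr_const card_ord /c mulr_natl.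
  rewrite mulrCA [c * _]mulrC -mulrDr; apply: ler_wpM2l => //; exact: q0.
rewrite (eq_fsbigr (fun t => a * \sum_(t' \in supp G') (q t t' * d_kappa kap t t' ^+ kinf kap)
   + c * \sum_(t' \in supp G') q t t')); last by move=> t _; rewrite fsum_lin.
by rewrite fsum_lin // mass mulr1.
Qed.

End CostCmp.
Section PartB.
Context {R : realType}.

Lemma my_eq_le {a a' b : R} : a = a' -> a' <= b -> a <= b.
Proof. by move=> ->. Qed.
Lemma my_le_eq2 {a b b' : R} : a <= b -> b = b' -> a <= b'.
Proof. by move=> h <-. Qed.
Lemma my_le_eq {a b b' : R} : a <= b' -> b = b' -> a <= b.
Proof. by move=> h ->. Qed.

Lemma ratio_bound {q w w' Bk eps : R} : 0 < w -> 0 < w' -> w <= Bk * w' -> 0 < Bk ->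
  `|q / w| <= eps / Bk -> `|q / w'| <= eps.
Proof.
move=> w0 w'0 hw Bk0 hq.
have -> : q / w' = q / w * (w / w') by rewrite mulrA divfK // lt0r_neq0.
rewrite normrM (ger0_norm (divr_ge0 (ltW w0) (ltW w'0))).
rewrite -(divfK (lt0r_neq0 Bk0) eps); apply: ler_pM => //.
- by rewrite divr_ge0 // ltW.
by rewrite ler_pdivrMr // mulrC.
Qed.

Lemma small_e (del : R) (d : nat) : 0 < del ->
  exists e : R, 0 < e /\ e <= 1 /\ d%:R * e <= del / 2.
Proof.
move=> del0; exists (Num.min 1 (del / 2 / (d%:R + 1))).
have d0 : 0 < d%:R + 1 :> R by rewrite ltr_pwDr // ler0n.
split; first by rewrite lt_min ltr01 !divr_gt0.
split; first by rewrite ge_min lexx.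
apply: (le_trans (y := (d%:R + 1) * (del / 2 / (d%:R + 1)))).
  apply: ler_pM => //; rewrite ?ler0n ?ge_min ?lexx ?orbT //.
    by rewrite le_min ler01 divr_ge0 // ?divr_ge0 ?ltW.
  by rewrite lerDl.
by rewrite mulrC divfK // lt0r_neq0.
Qed.

Lemma small_eta (c : R) (K : nat) : (0 < K)%N -> 0 < c ->
  exists eta : R, 0 < eta /\ forall w : R, 0 <= w -> w <= eta -> w ^+ K <= c.
Proof.
move=> K0 c0; exists (Num.min 1 c); split; first by rewrite lt_min ltr01.
move=> w w0 hw; have w1 : w <= 1 by apply: (le_trans hw); rewrite ge_min lexx.
apply: (le_trans (ler_iXnr K0 w0 w1)).
by apply: (le_trans hw); rewrite ge_min lexx orbT.
Qed.

Lemma final_ineq (w e del dd : R) (K : nat) : 0 < e ->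
  w <= e ^+ K * (del / 2) -> dd <= del / 2 -> e^-1 ^+ K * w + dd <= del.
Proof.
move=> e0 hw hd; rewrite [X in _ <= X](splitr del); apply: lerD => //.
by rewrite exprVn mulrC ler_pdivrMr ?exprn_gt0 // mulrC.
Qed.

Lemma part_b {d m k0 : nat} (Theta : set 'rV[R]_d) (f : 'rV[R]_m -> 'rV[R]_d -> R)
    (p0 : 'I_k0 -> R) (e0 : 'I_k0 -> 'rV[R]_d)
    (Gcal : set ('rV[R]_d -> R)) (kappa kappa' : 'I_d -> nat) :
  (0 < d)%N -> compact Theta -> Gcal (atoms_measure p0 e0) ->
  (forall G, Gcal G -> discrete_prob Theta G) ->
  (forall i, 0 < kappa i)%N -> (forall i, 0 < kappa' i)%N ->
  (forall i, kappa' i <= kappa i)%N ->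
  kappa_singular f Gcal kappa p0 e0 -> kappa_singular f Gcal kappa' p0 e0.
Proof.
move=> hd cT hG0 hdp hk hk' hkk
  [Gs [[inG cvW] [rp [T [H [xi [[rel [ind [Wpos [N [nN hN]]]]] hr]]]]]]].
have K0 : (0 < (kinf kappa))%N by exact: kinf_gt0.
have K'0 : (0 < (kinf kappa'))%N by exact: kinf_gt0.
have [M M0 hM] := ex_strict_bound_gt0 (compact_bounded cT).
have [B [B1 hB]] : exists B : R, 1 <= B /\
    forall t t', Theta t -> Theta t' -> forall i, `|t ord0 i - t' ord0 i| <= B.
  exists (1 + (M + M)); split; first by rewrite lerDl addr_ge0 // ltW.
  move=> t t' Tt Tt' i.
  apply: (le_trans (ler_normB _ _)).
  apply: (le_trans (y := M + M)); last by rewrite lerDr.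
  apply: lerD; apply: (le_trans (entry_le _ i)); apply: ltW.
    exact: hM.
  exact: hM.
have B0 : 0 < B by apply: lt_le_trans B1.
have [nn0 [fin0 [sub0 s0]]] := hdp _ hG0.
have dpn : forall n, discrete_prob Theta (Gs n) by move=> n; exact: hdp.
have exq : forall n, exists q, coupling (Gs n) (atoms_measure p0 e0) q.
  move=> n; apply: contrapT => hn.
  have hE : Eset kappa (Gs n) (atoms_measure p0 e0) = set0.
    by apply/seteqP; split => // c [q [cq _]]; apply: hn; exists q.
  by have := exprn_gt0 (kinf kappa) (Wpos n); rewrite Wpow // hE inf0 ltxx.
have cmpA : forall n, Wtilde kappa (Gs n) (atoms_measure p0 e0) ^+ (kinf kappa) <=
    B ^+ (kinf kappa) * Wtilde kappa' (Gs n) (atoms_measure p0 e0) ^+ (kinf kappa').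
  move=> n; have [_ [fn [subn _]]] := dpn n.
  have h := @cmp_inf R d (coupling (Gs n) (atoms_measure p0 e0)) (cost kappa (Gs n) (atoms_measure p0 e0))
    (cost kappa' (Gs n) (atoms_measure p0 e0)) (B ^+ (kinf kappa)) 0 (exprn_gt0 (kinf kappa) B0)
    (fun q cq => cost_ge0 kappa (Gs n) (atoms_measure p0 e0) q cq) _ (exq n).
  rewrite addr0 in h.
  apply: (my_eq_le (Wpow kappa (Gs n) (atoms_measure p0 e0) K0)).
  apply: (my_le_eq _ (congr1 (fun x => B ^+ (kinf kappa) * x) (Wpow kappa' (Gs n) (atoms_measure p0 e0) K'0))).
  apply: h.
  move=> q cq; rewrite addr0; apply: cost_cmp1 => //.
  by move=> t t' St St'; apply: hB; [apply: subn | apply: sub0].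
have cmpB : forall n e, 0 < e -> e <= 1 -> Wtilde kappa' (Gs n) (atoms_measure p0 e0) ^+ (kinf kappa') <=
    e^-1 ^+ (kinf kappa) * Wtilde kappa (Gs n) (atoms_measure p0 e0) ^+ (kinf kappa) + d%:R * e.
  move=> n e ep0 ep1; have ei0 : 0 < e^-1 by rewrite invr_gt0.
  have [_ [fn [subn sn]]] := dpn n.
  have h := @cmp_inf R d (coupling (Gs n) (atoms_measure p0 e0)) (cost kappa' (Gs n) (atoms_measure p0 e0))
    (cost kappa (Gs n) (atoms_measure p0 e0)) (e^-1 ^+ (kinf kappa)) (d%:R * e)
    (exprn_gt0 (kinf kappa) ei0)
    (fun q cq => cost_ge0 kappa' (Gs n) (atoms_measure p0 e0) q cq) _ (exq n).
  apply: (my_eq_le (Wpow kappa' (Gs n) (atoms_measure p0 e0) K'0)).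
  apply: (my_le_eq _ (congr1 (fun x => e^-1 ^+ (kinf kappa) * x + d%:R * e) (Wpow kappa (Gs n) (atoms_measure p0 e0) K0))).
  apply: h.
  by move=> q cq; apply: cost_cmp2.
have Wpos' : forall n, 0 < Wtilde kappa' (Gs n) (atoms_measure p0 e0).
  move=> n; rewrite lt0r W_ge0 andbT; apply/negP => /eqP h0.
  have z : Wtilde kappa' (Gs n) (atoms_measure p0 e0) ^+ (kinf kappa') = 0.
    by rewrite h0 expr0n /= (gtn_eqF K'0).
  have := my_le_eq2 (cmpA n) (congr1 (fun x => B ^+ (kinf kappa) * x) z).
  by rewrite mulr0 leNgt exprn_gt0.
have WK : forall n, 0 < Wtilde kappa (Gs n) (atoms_measure p0 e0) ^+ (kinf kappa).
  by move=> n; rewrite exprn_gt0.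
have WK' : forall n, 0 < Wtilde kappa' (Gs n) (atoms_measure p0 e0) ^+ (kinf kappa').
  by move=> n; rewrite exprn_gt0.
exists Gs; split.
  split; first exact: inG.
  apply/cvgrPdist_le => eps eps0.
  have del0 : 0 < eps ^+ (kinf kappa') by rewrite exprn_gt0.
  have [e [ep0 [ep1 de]]] : exists e : R, 0 < e /\ e <= 1 /\
      d%:R * e <= eps ^+ (kinf kappa') / 2.
    exact: small_e.
  have [eta [eta0 heta]] : exists eta : R, 0 < eta /\ forall w : R, 0 <= w -> w <= eta ->
      w ^+ (kinf kappa) <= e ^+ (kinf kappa) * (eps ^+ (kinf kappa') / 2).
    apply: small_eta => //; apply: mulr_gt0; [exact: exprn_gt0 | exact: divr_gt0].
  move/cvgrPdist_le : cvW => /(_ eta eta0).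
  apply: filterS => n hn.
  rewrite sub0r normrN ger0_norm in hn; last exact: W_ge0.
  rewrite sub0r normrN ger0_norm; last exact: W_ge0.
  rewrite -(ler_pXn2r K'0) ?nnegrE ?W_ge0 //; last exact: ltW.
  apply: (le_trans (cmpB n e ep0 ep1)).
  apply: (final_ineq _ _ _ _ _ ep0 _ de).
  exact: heta (W_ge0 _ _ _) hn.
exists rp, 0%N, (fun _ _ => 0), (fun _ => [::]).
split; last by case.
split => //; split; first by move=> c _ [].
split; first exact: Wpos'.
exists N; split => // x hx.
have hu : (fun n => (mixture f (Gs n) x - mixture f (atoms_measure p0 e0) x)
                / Wtilde kappa (Gs n) (atoms_measure p0 e0) ^+ kinf kappa) @ \oo --> 0.
  have hS := cvg_sum0 (fun l n => xi_ratio kappa p0 e0 Gs rp (xi l) n * H l x)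
    (fun l => cvg0_Mr _ _ (hr l)).
  apply: (cvg0_eq _ _ _ (cvg0_D _ _ (hN x hx) hS)) => n /=.
  by rewrite subrK.
have eB : 0 < B ^+ (kinf kappa) by rewrite exprn_gt0.
apply/cvgrPdist_le => eps eps0.
have eps' : 0 < eps / B ^+ (kinf kappa) by rewrite divr_gt0.
move/cvgrPdist_le : hu => /(_ _ eps').
apply: filterS => n; rewrite !sub0r !normrN big_ord0 subr0 => hn.
exact: (ratio_bound (WK n) (WK' n) (cmpA n) eB hn).
Qed.

End PartB.

Theorem lemma3p4 (R : realType) (d m : nat) (Theta : set 'rV[R]_d)
    (f : 'rV[R]_m -> 'rV[R]_d -> R)
    (k0 : nat) (p0 : 'I_k0 -> R) (e0 : 'I_k0 -> 'rV[R]_d)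
    (Gcal : set ('rV[R]_d -> R)) (kappa : 'I_d -> nat) :
  (0 < d)%N ->
  compact Theta ->
  (* f(.|t) are (nonnegative) densities, linearly independent for distinct t *)
  (forall x t, 0 <= f x t) ->
  (forall (k : nat) (e : 'I_k -> 'rV[R]_d), injective e -> (forall i, Theta (e i)) ->
     ae_lin_indep (fun i x => f x (e i))) ->
  (* G_0 = sum_i p0_i delta_{e0_i}, distinct atoms in Theta *)
  injective e0 -> (forall i, 0 < p0 i) -> \sum_(i < k0) p0 i = 1 ->
  (forall i, Theta (e0 i)) ->
  (* the class Gcal *)
  Gcal (atoms_measure p0 e0) ->
  (forall G, Gcal G -> discrete_prob Theta G) ->
  (exists K : nat, forall G, Gcal G -> atoms_le K G) ->
  (* kappa in N^d and the uniform Lipschitz assumption *)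
  (forall i, (0 < kappa i)%N) ->
  unif_lipschitz Theta f (kinf kappa) ->
  (* (a) invariance *)
  (forall Gs, kseq Gcal kappa (atoms_measure p0 e0) Gs ->
     (exists (rp : @relabel R d k0) (T : nat) (H : 'I_T -> 'rV[R]_m -> R)
             (xi : 'I_T -> @mpolyseq R (rl_var rp)),
        kminimal_form f kappa p0 e0 Gs rp T H xi /\
        forall l, xi_ratio kappa p0 e0 Gs rp (xi l) @ \oo --> 0) ->
     forall (rp' : @relabel R d k0) (T' : nat) (H' : 'I_T' -> 'rV[R]_m -> R)
            (xi' : 'I_T' -> @mpolyseq R (rl_var rp')),
       kminimal_form f kappa p0 e0 Gs rp' T' H' xi' ->
       exists phi : nat -> nat, (forall n, (phi n < phi n.+1)%N) /\
         forall l, (fun n => xi_ratio kappa p0 e0 Gs rp' (xi' l) (phi n)) @ \oo --> 0)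
  /\
  (* (b) monotonicity *)
  (forall kappa' : 'I_d -> nat, (forall i, (0 < kappa' i)%N) ->
     (forall i, (kappa' i <= kappa i)%N) ->
     kappa_singular f Gcal kappa p0 e0 -> kappa_singular f Gcal kappa' p0 e0)
  /\
  (* in particular: r-singular with r > 1 implies (r-1)-singular *)
  (forall r : nat, (1 < r)%N -> kappa = (fun _ => r) ->
     kappa_singular f Gcal (fun _ : 'I_d => r) p0 e0 ->
     kappa_singular f Gcal (fun _ : 'I_d => r.-1) p0 e0).
Proof.
move=> hd cT hnn hli inj hp sum1 hTh hG0 hdp hK hk hlip.
split.
  move=> Gs _ [rp [T [H [xi [hm hr]]]]] rp' T' H' xi' hm'.
  exists id; split; first by move=> n.
  move=> l.
  exact: (part_a f kappa p0 e0 Gs rp T H xi rp' T' H' xi' hm hr hm' l).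
split.
  move=> kappa' hk' hkk.
  exact: (part_b Theta f p0 e0 Gcal kappa kappa' hd cT hG0 hdp hk hk' hkk).
move=> r r1 _ hs.
apply: (part_b Theta f p0 e0 Gcal (fun _ => r) (fun _ => r.-1) hd cT hG0 hdp _ _ _ hs).
- by move=> i; apply: leq_trans r1.
- by move=> i; rewrite -ltnS prednK // (leq_trans _ r1).
- by move=> i; exact: leq_pred.
Qed.
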